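(* Let $\mathcal{H}_\xi$, $C$, $\Omega$, $D$, $\gamma$ be as in the context. Then \[ D^2=\Omega\otimes1-2\int_{|v|=1}\tilde\xi(v\otimes\bar v)\otimes\gamma(v\otimes\bar v)\,dv \quad\text{in }\mathcal{H}_\xi\otimes C. \]
   Context: Let $\mathfrak{g}=\mathfrak{gl}_n(\mathbb{C})$ ($n\ge1$), $H=\mathcal{U}(\mathfrak{g})$, $\mathfrak{h}=\mathbb{C}^n$ the standard module, $\mathfrak{h}^*$ its dual with natural pairing $(\cdot,\cdot)$, $V=\mathfrak{h}\oplus\mathfrak{h}^*$. Fix the standard basis $y_1,\dots,y_n$ of $\mathfrak{h}$ and dual basis $x_1,\dots,x_n$; $E_{ij}$ sends $y_j$ to $y_i$. For $v\in\mathfrak{h}$, $v\otimes\bar v=\sum_{i,j}v_i\bar v_jE_{ij}\in\mathfrak{gl}_n$ (the map $w\mapsto v\sum_k w_k\bar v_k$); for a polynomial $q$, $q(v\otimes\bar v)$ is the corresponding element of $\mathcal{U}(\mathfrak{gl}_n)$; $\int_{|v|=1}\cdots dv$ is integration over the Euclidean unit sphere of $\mathbb{C}^n$ with respect to surface measure. Let $\xi$ be a polynomial, $\tilde\xi(z)=\frac1{2\pi^n}\partial^n(z^n\xi(z))$, and define $\kappa:V\wedge V\to H$ by $\kappa(x,x')=\kappa(y,y')=0$, $\kappa(y,x)=\int_{|v|=1}(x,(v\otimes\bar v)\cdot y)\tilde\xi(v\otimes\bar v)\,dv$ for $x,x'\in\mathfrak{h}^*,y,y'\in\mathfrak{h}$.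 $\mathcal{H}_\xi=(T(V)\rtimes H)/I_\kappa$ with $I_\kappa$ generated by $uw-wu-\kappa(u,w)$, $u,w\in V$. Let $C=C(V)$ be the Clifford algebra for the symmetric form $\langle x+y,x'+y'\rangle=(x,y')+(x',y)$, with relations $uw+wu=2\langle u,w\rangle$. $\Omega=\sum_i(x_iy_i+y_ix_i)$, $D=\sum_i(x_i\otimes y_i+y_i\otimes x_i)\in\mathcal{H}_\xi\otimes C$, and $\gamma:\mathcal{U}(\mathfrak{gl}_n)\to C$ is the algebra map with $\gamma(E_{ij})=\frac14(y_ix_j-x_jy_i)$. *)

(* Defs.v *)
From HB Require Import structures.
From mathcomp Require Import all_boot all_order all_algebra.
From mathcomp Require Import complex.
From mathcomp Require Import all_classical all_reals all_analysis.

Set Implicit Arguments.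
Unset Strict Implicit.
Unset Printing Implicit Defensive.
Import Order.TTheory GRing.Theory Num.Theory.
Local Open Scope ring_scope.

Section Defs.
Variable R : realType.
Local Notation C := (complex R).

Fixpoint iint (d : nat) (f : seq R -> R) : R :=
  if d is d'.+1 then
    Rintegral lebesgue_measure setT (fun t : R => iint d' (fun s => f (t :: s)))
  else f [::].

(* Identification R^{2n} = C^n :  v_k = s_k + i s_{n+k}. *)
Definition cvec_of (n : nat) (s : seq R) : 'I_n -> C :=
  fun k => Complex s`_k s`_(n + k).

Definition sqnorm (n : nat) (s : seq R) : R := \sum_(k < 2 * n) s`_k ^+ 2.

(* Integral of h : C^n -> R over the Euclidean unit sphere of C^n = R^{2n}
   w.r.t. surface measure sigma, via the cone-measure formula
     sigma(A) = 2n * lambda_{2n}({ r a | a in A, 0 < r <= 1 }),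
   i.e.  \int_{S} h dsigma = 2n \int_{0<|x|<=1} h(x/|x|) dx.            *)
Definition sphintR (n : nat) (h : ('I_n -> C) -> R) : R :=
  (2 * n)%:R * iint (2 * n) (fun s =>
    let r2 := sqnorm n s in
    if (0 < r2) && (r2 <= 1) then
      h (fun k => @cvec_of n s k / (Num.sqrt r2)%:C%C)
    else 0).

Definition sphint (n : nat) (g : ('I_n -> C) -> C) : C :=
  Complex (sphintR (fun v => complex.Re (g v))) (sphintR (fun v => complex.Im (g v))).

Definition xitilde (n : nat) (xi : {poly C}) : {poly C} :=
  ((2 * pi ^+ n)^-1)%:C%C *: ((('X ^+ n * xi) ^`(n))).

(* Inside a C-algebra A, with e i j the image of E_ij in A:
   the image of v (x) vbar = \sum_{i,j} v_i conj(v_j) E_ij.             *)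
Definition vv (n : nat) (A : algType C) (e : 'I_n -> 'I_n -> A)
  (v : 'I_n -> C) : A :=
  \sum_(i < n) \sum_(j < n) (v i * conjc (v j)) *: e i j.

(* The A-valued integral  \int_{|v|=1} w(v) * xi~(v (x) vbar) dv  for a
   scalar weight w : C^n -> C, where xi~(v (x) vbar) is evaluated in the
   (noncommutative) algebra generated by the e i j.  It is computed by
   expanding the integrand into a finite C-linear combination of fixed
   elements of A with scalar polynomial coefficient functions and
   integrating these coefficients:
     w(v) xi~(M v) = \sum_k c_k w(v) (\sum_{(i,j)} v_i conj(v_j) e_ij)^k
                   = \sum_k c_k \sum_{s : 'I_k -> 'I_n * 'I_n}
                        (w(v) \prod_l v_{s_l.1} conj(v_{s_l.2}))
                        *: \prod_l e_{s_l}.                           *)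
Definition xi_int (n : nat) (A : algType C) (e : 'I_n -> 'I_n -> A)
  (xi : {poly C}) (w : ('I_n -> C) -> C) : A :=
  let xt := xitilde n xi in
  \sum_(k < size xt) xt`_k *:
    \sum_(s : {ffun 'I_k -> 'I_n * 'I_n})
       sphint (fun v => w v * \prod_(l < k) (v (s l).1 * conjc (v (s l).2)))
       *: \prod_(l < k) e (s l).1 (s l).2.

(* Image of gamma(E_pq) = 1/4 (y_p x_q - x_q y_p) in A, where cx, cy are
   the images of the Clifford generators 1 (x) x_i, 1 (x) y_i.            *)
Definition gammaE (n : nat) (A : algType C) (cx cy : 'I_n -> A) (p q : 'I_n) : A :=
  (4%:R : C)^-1 *: (cy p * cx q - cx q * cy p).

(* Images of D = \sum_i (x_i (x) y_i + y_i (x) x_i) and of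
   Omega (x) 1 = \sum_i (x_i y_i + y_i x_i) (x) 1.                       *)
Definition Dirac (n : nat) (A : algType C) (x y cx cy : 'I_n -> A) : A :=
  \sum_(i < n) (x i * cy i + y i * cx i).
Definition Omega (n : nat) (A : algType C) (x y : 'I_n -> A) : A :=
  \sum_(i < n) (x i * y i + y i * x i).
End Defs.

(* Main.v *)
Require Import Defs.
From HB Require Import structures.
From mathcomp Require Import all_boot all_order all_algebra.
From mathcomp Require Import complex.
From mathcomp Require Import all_classical all_reals all_analysis.
Import Order.TTheory GRing.Theory Num.Theory.
Local Open Scope ring_scope.

From mathcomp Require Import ring.

Lemma zid (A : pzRingType) (a b c r : A) :
  a*c + b*(r*+2 - c) + (b - a)*(c - r) = (a+b)*r.
Proof.
rewrite !mulrBr mulrnAr !mulrBl mulrDl mulr2n.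
set ac := a*c; set br := b*r; set bc := b*c; set ar := a*r.
rewrite opprB !addrA addrNK.
by rewrite -(addrA ac) (addrC ac) addrK addrAC addrK addrC.
Qed.

Lemma sc (R : realType) : (2%:R * ((4%:R : R[i])^-1 * 2%:R)) = 1.
Proof. by field. Qed.

Lemma swap4 (A : pzRingType) (a b c d : A) : b * c = c * b ->
  (a * b) * (c * d) = (a * c) * (b * d).
Proof. by move=> h; rewrite mulrA -(mulrA a) h mulrA -mulrA. Qed.

Lemma antisym0 (R : realType) (A : lmodType R[i]) n (F : 'I_n -> 'I_n -> A) :
  (forall i j, F j i = - F i j) -> \sum_(i < n) \sum_(j < n) F i j = 0.
Proof.
move=> h.
have e : \sum_(i < n) \sum_(j < n) F i j = - \sum_(i < n) \sum_(j < n) F i j.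
  rewrite {1}exchange_big /= -sumrN; apply: eq_bigr => i _.
  rewrite -sumrN; apply: eq_bigr => j _; exact: h.
set S := \sum_(i < n) _ in e *.
have : (2%:R : R[i]) *: S = 0 by rewrite scaler_nat mulr2n {1}e addNr.
by move/eqP; rewrite scaler_eq0 pnatr_eq0 /= => /eqP.
Qed.

Lemma delta_sum (A : pzRingType) n (F : 'I_n -> A) (p : 'I_n) :
  \sum_(q < n) F q * (p == q)%:R = F p.
Proof.
rewrite (bigD1 p) //= eqxx mulr1 big1 ?addr0 // => q.
by rewrite eq_sym => /negbTE ->; rewrite mulr0.
Qed.

(* H_xi (x) C is presented by the generators E_ij (x) 1, x_i (x) 1, y_i (x) 1,
   1 (x) x_i, 1 (x) y_i with the relations below; an identity holds in
   H_xi (x) C iff it holds for the images of these generators in every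
   C-algebra A satisfying these relations. *)
Theorem mainTheorem2 (R : realType) (n : nat) (xi : {poly R[i]})
  (A : algType R[i]) (e : 'I_n -> 'I_n -> A) (x y cx cy : 'I_n -> A) :
  (0 < n)%N ->
  (* U(gl_n) relations *)
  (forall i j k l : 'I_n, e i j * e k l - e k l * e i j
      = (j == k)%:R *: e i l - (l == i)%:R *: e k j) ->
  (* smash product relations: E_ij . y_k = delta_jk y_i, E_ij . x_k = - delta_ki x_j *)
  (forall i j k : 'I_n, e i j * y k - y k * e i j = (j == k)%:R *: y i) ->
  (forall i j k : 'I_n, e i j * x k - x k * e i j = - ((k == i)%:R *: x j)) ->
  (* relations of I_kappa *)
  (forall i j : 'I_n, x i * x j - x j * x i = 0) ->
  (forall i j : 'I_n, y i * y j - y j * y i = 0) ->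
  (forall i j : 'I_n, y j * x i - x i * y j
      = xi_int e xi (fun v => v i * conjc (v j))) ->
  (* Clifford relations *)
  (forall i j : 'I_n, cx i * cx j + cx j * cx i = 0) ->
  (forall i j : 'I_n, cy i * cy j + cy j * cy i = 0) ->
  (forall i j : 'I_n, cx i * cy j + cy j * cx i = (i == j)%:R *+ 2) ->
  (* the two tensor factors commute *)
  (forall i j k : 'I_n, e i j * cx k = cx k * e i j /\ e i j * cy k = cy k * e i j) ->
  (forall i k : 'I_n, x i * cx k = cx k * x i /\ x i * cy k = cy k * x i) ->
  (forall i k : 'I_n, y i * cx k = cx k * y i /\ y i * cy k = cy k * y i) ->
  Dirac x y cx cy * Dirac x y cx cy
  = Omega x y - 2%:R *: \sum_(p < n) \sum_(q < n)
        xi_int e xi (fun v => v p * conjc (v q)) * gammaE cx cy p q.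
Proof.
move=> _ _ _ _ hx hy hK hcx hcy hxy _ hxc hyc.
rewrite /Dirac /Omega.
have -> : \sum_(p < n) \sum_(q < n)
        xi_int e xi (fun v => v p * conjc (v q)) * gammaE cx cy p q
   = \sum_(p < n) \sum_(q < n) (y q * x p - x p * y q) * gammaE cx cy p q.
  by apply: eq_bigr => p _; apply: eq_bigr => q _; rewrite hK.
have expand : forall i j, (x i * cy i + y i * cx i) * (x j * cy j + y j * cx j)
  = x i * x j * (cy i * cy j) + x i * y j * (cy i * cx j)
    + (y i * x j * (cx i * cy j) + y i * y j * (cx i * cx j)).
  move=> i j; rewrite mulrDr !mulrDl.
  rewrite (@swap4 _ (x i) (cy i) (x j) (cy j)); last by case: (hxc j i).
  rewrite (@swap4 _ (x i) (cy i) (y j) (cx j)); last by case: (hyc j i).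
  rewrite (@swap4 _ (y i) (cx i) (x j) (cy j)); last by case: (hxc j i).
  rewrite (@swap4 _ (y i) (cx i) (y j) (cx j)); last by case: (hyc j i).
  by rewrite addrACA.
rewrite mulr_suml; under eq_bigr => i _ do rewrite mulr_sumr.
under eq_bigr => i _ do under eq_bigr => j _ do rewrite expand.
under eq_bigr => i _ do rewrite !big_split /=.
rewrite !big_split /=.
rewrite (@antisym0 R A n (fun i j => x i * x j * (cy i * cy j))); last first.
  move=> i j /=; rewrite (subr0_eq (hx i j)) -(addr0_eq (hcy i j)).
  by rewrite mulrN.
rewrite (@antisym0 R A n (fun i j => y i * y j * (cx i * cx j))); last first.
  move=> i j /=; rewrite (subr0_eq (hy i j)) -(addr0_eq (hcx i j)).
  by rewrite mulrN.
rewrite add0r addr0 [X in _ + X = _]exchange_big /= -big_split /=.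
under eq_bigr => i _ do rewrite -big_split /=.
apply/eqP; rewrite eq_sym subr_eq; apply/eqP.
rewrite -big_split /= scaler_sumr; under [X in _ = _ + X]eq_bigr => i _ do rewrite scaler_sumr.
rewrite -big_split /=; under [X in _ = X]eq_bigr => i _ do rewrite -big_split /=.
apply: eq_bigr => p _.
rewrite -[LHS](@delta_sum A n (fun q => x p * y q + y q * x p) p).
apply: eq_bigr => q _.
have d : cx q * cy p = (p == q)%:R *+ 2 - cy p * cx q.
  by apply: (canRL (addrK _)); rewrite hxy eq_sym.
rewrite /gammaE d.
set c := cy p * cx q; set r := ((p == q)%:R : A).
have -> : c - (r *+ 2 - c) = (c - r) *+ 2.
  by rewrite opprB addrA -mulr2n -mulrnBl.
rewrite -[(c - r) *+ 2]scaler_nat scalerA -scalerAr scalerA sc scale1r.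
by rewrite zid.
Qed.
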